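(* Let $V$ be a commutative unital quantale whose underlying lattice is a frame. Let $(X,a,+)$ be a $V$-group and $S$ a subgroup of $X$, equipped with the restriction of $a$ to $S\times S$. Then the inclusion $V$-functor $S\hookrightarrow X$ is open if and only if it is proper.
   Context: A commutative unital quantale $V$ is a complete lattice with a commutative associative operation $\otimes$ with unit $k$ preserving arbitrary joins in each variable. A $V$-category $(X,a)$: $a\colon X\times X\to V$ with $k\le a(x,x)$ and $a(x,x')\otimes a(x',x'')\le a(x,x'')$. A $V$-group $(X,a,+)$ is a $V$-category with a group structure (additive, not necessarily abelian) such that $a(x_1,x_2)\otimes a(x_1',x_2')\le a(x_1+x_1',x_2+x_2')$. A $V$-functor $f\colon(X,a)\to(Y,b)$ (a map with $a(x,x')\le b(f(x),f(x'))$) is proper if $b(f(x),y)=\bigvee\{a(x,x')\mid f(x')=y\}$ for all $x\in X$, $y\in Y$, and open if $b(y,f(x))=\bigvee\{a(x',x)\mid f(x')=y\}$ for all $x\in X$, $y\in Y$ (empty joins being $\bot$). *)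

(* Defs.v *)
Set Implicit Arguments.
Unset Strict Implicit.



Record Quantale : Type := {
  qcar :> Type;
  qle : qcar -> qcar -> Prop;
  qle_refl : forall x, qle x x;
  qle_trans : forall x y z, qle x y -> qle y z -> qle x z;
  qle_antisym : forall x y, qle x y -> qle y x -> x = y;
  qsup : (qcar -> Prop) -> qcar;
  qsup_ub : forall (A : qcar -> Prop) x, A x -> qle x (qsup A);
  qsup_least : forall (A : qcar -> Prop) y,
      (forall x, A x -> qle x y) -> qle (qsup A) y;
  qten : qcar -> qcar -> qcar;
  qten_assoc : forall x y z, qten x (qten y z) = qten (qten x y) z;
  qten_comm : forall x y, qten x y = qten y x;
  qk : qcar;
  qten_k : forall x, qten qk x = x;
  qten_supr : forall x (A : qcar -> Prop),
      qten x (qsup A) = qsup (fun z => exists y, A y /\ z = qten x y);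
  qten_supl : forall x (A : qcar -> Prop),
      qten (qsup A) x = qsup (fun z => exists y, A y /\ z = qten y x)
}.
Arguments qle {q} _ _.
Arguments qsup {q} _.
Arguments qten {q} _ _.

Definition qmeet (V : Quantale) (x y : qcar V) : qcar V :=
  qsup (fun z => qle z x /\ qle z y).
Arguments qmeet {V} _ _.

Definition is_frame (V : Quantale) : Prop :=
  forall (x : V) (A : V -> Prop),
    qmeet x (qsup A) = qsup (fun z => exists y, A y /\ z = qmeet x y).

Definition is_Vcat (V : Quantale) (X : Type) (a : X -> X -> V) : Prop :=
  (forall x, qle (qk V) (a x x)) /\
  (forall x x' x'', qle (qten (a x x') (a x' x'')) (a x x'')).

Record GroupOn (X : Type) := {
  gzero : X;
  gadd : X -> X -> X;
  gopp : X -> X;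
  gaddA : forall x y z, gadd x (gadd y z) = gadd (gadd x y) z;
  gadd0l : forall x, gadd gzero x = x;
  gadd0r : forall x, gadd x gzero = x;
  gaddNl : forall x, gadd (gopp x) x = gzero;
  gaddNr : forall x, gadd x (gopp x) = gzero
}.

Definition is_Vgroup (V : Quantale) (X : Type) (G : GroupOn X)
    (a : X -> X -> V) : Prop :=
  is_Vcat a /\
  forall x1 x2 x1' x2',
    qle (qten (a x1 x2) (a x1' x2')) (a (gadd G x1 x1') (gadd G x2 x2')).

Definition is_subgroup (X : Type) (G : GroupOn X) (S : X -> Prop) : Prop :=
  S (gzero G) /\
  (forall x y, S x -> S y -> S (gadd G x y)) /\
  (forall x, S x -> S (gopp G x)).

Definition is_Vfunctor (V : Quantale) (X Y : Type) (a : X -> X -> V)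
    (b : Y -> Y -> V) (f : X -> Y) : Prop :=
  forall x x', qle (a x x') (b (f x) (f x')).

Definition is_proper (V : Quantale) (X Y : Type) (a : X -> X -> V)
    (b : Y -> Y -> V) (f : X -> Y) : Prop :=
  forall x y, b (f x) y = qsup (fun v => exists x', f x' = y /\ v = a x x').

Definition is_open (V : Quantale) (X Y : Type) (a : X -> X -> V)
    (b : Y -> Y -> V) (f : X -> Y) : Prop :=
  forall x y, b y (f x) = qsup (fun v => exists x', f x' = y /\ v = a x' x).

Definition restrict (V : Quantale) (X : Type) (S : X -> Prop)
    (a : X -> X -> V) : {x : X | S x} -> {x : X | S x} -> V :=
  fun u v => a (proj1_sig u) (proj1_sig v).
Arguments restrict {V X} S a _ _.

(* Main.v *)
Require Import Defs.
From Stdlib Require Import Setoid Classical_Prop.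

Lemma ten_mono_r (V : Quantale) (x y z : V) :
  qle y z -> qle (qten x y) (qten x z).
Proof.
  intros Hyz.
  assert (E : z = qsup (fun w => w = y \/ w = z)).
  { apply qle_antisym.
    - apply qsup_ub. now right.
    - apply qsup_least. intros w [->| ->]; [exact Hyz | apply qle_refl]. }
  rewrite E, qten_supr. apply qsup_ub. exists y. split; auto.
Qed.

Lemma key (V : Quantale) (X : Type) (G : GroupOn X) (a : X -> X -> V)
  (hX : is_Vgroup G a) (x x' : X) :
  qle (a x x') (a (gopp G x') (gopp G x)).
Proof.
  destruct hX as [[Hr Ht] Hg].
  assert (H1 : qle (a x x') (a (gzero G) (gadd G x' (gopp G x)))).
  { pose proof (Hg x x' (gopp G x) (gopp G x)) as H.
    rewrite gaddNr in H. eapply qle_trans. 2: exact H.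
    rewrite <- (@qten_k V (a x x')) at 1. rewrite (qten_comm (qk V)).
    apply ten_mono_r. apply Hr. }
  pose proof (Hg (gopp G x') (gopp G x') (gzero G) (gadd G x' (gopp G x))) as H.
  rewrite gadd0r, gaddA, gaddNl, gadd0l in H.
  eapply qle_trans. exact H1. eapply qle_trans. 2: exact H.
  rewrite <- (@qten_k V (a (gzero G) _)) at 1. rewrite (qten_comm (qk V)).
  rewrite (qten_comm (a (gopp G x') _)).
  apply ten_mono_r. apply Hr.
Qed.

Lemma bot_eq (V : Quantale) (v : V) (A : V -> Prop) :
  (forall w, ~ A w) -> (forall z, qle v z) -> v = qsup A.
Proof.
  intros HA Hv. apply qle_antisym. apply Hv.
  apply qsup_least. intros w Hw. exfalso. exact (HA w Hw).
Qed.

Lemma single_eq (V : Quantale) (v : V) (A : V -> Prop) :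
  (forall w, A w <-> w = v) -> v = qsup A.
Proof.
  intros HA. apply qle_antisym. apply qsup_ub. apply HA. reflexivity.
  apply qsup_least. intros w Hw. apply HA in Hw. subst. apply qle_refl.
Qed.

Lemma below_sup_empty (V : Quantale) (v : V) (A : V -> Prop) :
  (forall w, ~ A w) -> qle v (qsup A) -> forall z, qle v z.
Proof.
  intros HA Hv z. eapply qle_trans. exact Hv.
  apply qsup_least. intros w Hw. exfalso. exact (HA w Hw).
Qed.

Theorem corollary5p7 (V : Quantale) (hV : is_frame V)
    (X : Type) (G : GroupOn X) (a : X -> X -> V) (hX : is_Vgroup G a)
    (S : X -> Prop) (hS : is_subgroup G S) :
  is_open (restrict S a) a (@proj1_sig X S) <->
  is_proper (restrict S a) a (@proj1_sig X S).
Proof.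
  destruct hS as [H0 [HD HN]].
  assert (invS : forall y, S (gopp G y) -> S y).
  { intros y Hy. apply HN in Hy.
    replace y with (gopp G (gopp G y)); [exact Hy|].
    rewrite <- (gadd0l G (gopp G (gopp G y))), <- (gaddNr G y), <- gaddA,
      gaddNr, gadd0r. reflexivity. }
  unfold is_open, is_proper, restrict; split; intros Ho [s Hs] y; simpl.
  - destruct (Classical_Prop.classic (S y)) as [Hy|Hy].
    + apply single_eq. intros w; split.
      * intros [[x' Hx'] [E ->]]. simpl in *. subst. reflexivity.
      * intros ->. exists (exist _ y Hy). auto.
    + assert (HA : forall w, ~ (exists x' : {x | S x}, proj1_sig x' = y /\ w = a s (proj1_sig x'))).
      { intros w [[x' Hx'] [E _]]. simpl in E. subst. contradiction. }
      apply bot_eq; [exact HA|].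
      assert (HB : forall w, ~ (exists x' : {x | S x}, proj1_sig x' = gopp G y /\ w = a (proj1_sig x') (gopp G s))).
      { intros w [[x' Hx'] [E _]]. simpl in E. subst. apply Hy, invS, Hx'. }
      apply (@below_sup_empty V _ _ HB).
      pose proof (Ho (exist _ (gopp G s) (HN s Hs)) (gopp G y)) as E. simpl in E.
      eapply qle_trans; [apply (@key V X G a hX)|]. rewrite E. apply qle_refl.
  - destruct (Classical_Prop.classic (S y)) as [Hy|Hy].
    + apply single_eq. intros w; split.
      * intros [[x' Hx'] [E ->]]. simpl in *. subst. reflexivity.
      * intros ->. exists (exist _ y Hy). auto.
    + assert (HA : forall w, ~ (exists x' : {x | S x}, proj1_sig x' = y /\ w = a (proj1_sig x') s)).
      { intros w [[x' Hx'] [E _]]. simpl in E. subst. contradiction. }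
      apply bot_eq; [exact HA|].
      assert (HB : forall w, ~ (exists x' : {x | S x}, proj1_sig x' = gopp G y /\ w = a (gopp G s) (proj1_sig x'))).
      { intros w [[x' Hx'] [E _]]. simpl in E. subst. apply Hy, invS, Hx'. }
      apply (@below_sup_empty V _ _ HB).
      pose proof (Ho (exist _ (gopp G s) (HN s Hs)) (gopp G y)) as E. simpl in E.
      eapply qle_trans; [apply (@key V X G a hX)|]. rewrite E. apply qle_refl.
Qed.
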